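(* Fix an sBS $k$ and suppose that in slots $0,1,\dots,t-1$ each file is recommended independently with probability $q=r/F$ and cached independently with probability $p=c/F$, and that $\hat{\mathbf P}_k^{(t)}$ is the point estimate. Let $(\mathbf u^*_{o,t},\mathbf v^*_{o,t})\in\arg\max_{(\mathbf u,\mathbf v)\in\mathcal C_{c,r}}\mathbf u^T\hat{\mathbf P}_k^{(t)}\mathbf v$. Then for any $\epsilon>0$ and $\delta>0$, with probability at least $1-\delta$, $$(\mathbf u^*_{o,t})^T\mathbf P_k\mathbf v^*_{o,t}\ge\sup_{(\mathbf u,\mathbf v)\in\mathcal C_{c,r}}\mathbf u^T\mathbf P_k\mathbf v-\epsilon,$$ provided $$t\ge\frac{1}{q\left(1-\exp\{-\frac{N\epsilon^2}{8\kappa^2F^2c^2r^2}\}\right)}\log\frac{2|\mathcal N_\epsilon|F^2}{\delta}.$$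
   Context: Setting: a catalog of $F$ files $\{1,\dots,F\}$; time is slotted; in every slot each of $N$ users of a small base station (sBS) requests a file. For sBS $k$, the probability transition matrix (PTM) $\mathbf P_k\in[0,1]^{F\times F}$ has entries $(\mathbf P_k)_{ij}=p_{ij,k}$, the probability that a user at sBS $k$ requests file $i$ given that file $j$ is recommended; $\mathbf P_k$ does not change over time. For a cache size $c>0$ and a recommendation budget $r>0$, the strategy set is $\mathcal C_{c,r}=\{(\mathbf u,\mathbf v)\in[0,1]^F\times[0,1]^F:\mathbf u^T\mathbf 1\le c,\ \mathbf v^T\mathbf 1\le r\}$; the average cache hit of $(\mathbf u,\mathbf v)$ at sBS $k$ is $\mathbf u^T\mathbf P_k\mathbf v$. $d_{ik}^{(s)}$ is the number of requests for file $i$ at sBS $k$ in slot $s$, and $v_{jk}^{s}\in\{0,1\}$ indicates whether file $j$ was recommended at sBS $k$ in slot $s$. Statistical assumption: conditionally on the recommendation indicators, for each slot $s$ with $v_{jk}^{s-1}=1$, $d_{ik}^{(s)}$ is a sum of $N$ i.i.d. Bernoulli$(p_{ij,k})$ variables, independent across such slots. Point estimator: $\hat p_{ij,k}^{(t)}=\frac{\sum_{s=0}^{t-1}d_{ik}^{(s)}v_{jk}^{s-1}}{N\sum_{s=0}^{t-1}v_{jk}^{s-1}}$, and $\hat{\mathbf P}_k^{(t)}$ is the matrix of these entries. An $\epsilon$-cover of $\mathcal C_{c,r}$ is a finite set $\mathcal N_\epsilon$ of pairs $(\mathbf x,\mathbf y)$ such that for every $(\mathbf u,\mathbf v)\in\mathcal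 C_{c,r}$ some $(\mathbf x,\mathbf y)\in\mathcal N_\epsilon$ satisfies $\|\mathbf u-\mathbf x\|_2\le\epsilon/8$ and $\|\mathbf v-\mathbf y\|_2\le\epsilon/8$; $|\mathcal N_\epsilon|$ is its cardinality. $\kappa>0$ is a fixed constant such that $|\mathbf x^T A\mathbf y|\le\kappa\|\mathbf x\|_1\|\mathbf y\|_1\|A\|_F$ for all vectors $\mathbf x,\mathbf y$ and matrices $A$. *)

(* Defs.v *)
From mathcomp Require Import all_boot all_order all_algebra.
From mathcomp Require Import boolp classical_sets reals sequences exp.

Set Implicit Arguments.
Unset Strict Implicit.
Unset Printing Implicit Defensive.

Import Order.TTheory GRing.Theory Num.Theory.
Local Open Scope ring_scope.

Section Defs.
Variable R : realType.

Definition is_pmf (Omega : finType) (mu : Omega -> R) : Prop :=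
  (forall w, 0 <= mu w) /\ \sum_(w : Omega) mu w = 1.

Definition Pr (Omega : finType) (mu : Omega -> R) (A : Omega -> Prop) : R :=
  \sum_(w : Omega) (if `[< A w >] then mu w else 0).

Definition mutually_independent (Omega : finType) (mu : Omega -> R)
    (I : finType) (X : I -> Omega -> bool) : Prop :=
  forall (S : {set I}) (b : I -> bool),
    Pr mu (fun w => forall i, i \in S -> X i w = b i)
    = \prod_(i in S) Pr mu (fun w => X i w = b i).

Definition binom_pmf (N : nat) (p : R) (k : nat) : R :=
  ('C(N, k))%:R * p ^+ k * (1 - p) ^+ (N - k).

Definition bilin (m n : nat) (x : 'cV[R]_m) (A : 'M[R]_(m, n)) (y : 'cV[R]_n) : R :=
  (x^T *m A *m y) 0 0.

Definition norm1 (n : nat) (x : 'cV[R]_n) : R := \sum_i `|x i 0|.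
Definition norm2 (n : nat) (x : 'cV[R]_n) : R := Num.sqrt (\sum_i (x i 0) ^+ 2).
Definition frob (m n : nat) (A : 'M[R]_(m, n)) : R :=
  Num.sqrt (\sum_i \sum_j (A i j) ^+ 2).

Definition inC (F : nat) (c r : R) (u v : 'cV[R]_F) : Prop :=
  (forall i, 0 <= u i 0 <= 1) /\ (forall j, 0 <= v j 0 <= 1) /\
  \sum_i u i 0 <= c /\ \sum_j v j 0 <= r.

Definition supC (F : nat) (c r : R) (P : 'M[R]_F) : R :=
  sup [set x : R | exists u v, inC c r u v /\ x = bilin u P v]%classic.

Definition is_argmaxC (F : nat) (c r : R) (M : 'M[R]_F) (u v : 'cV[R]_F) : Prop :=
  inC c r u v /\ forall u' v', inC c r u' v' -> bilin u' M v' <= bilin u M v.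

(* the finite list cov is an epsilon-cover of C_{c,r} (duplicate-free, so
   its size is the cardinality |N_eps|) *)
Definition is_eps_cover (F : nat) (c r eps : R) (cov : seq ('cV[R]_F * 'cV[R]_F)) : Prop :=
  uniq cov /\
  forall u v, inC c r u v ->
    exists2 xy, xy \in cov & norm2 (u - xy.1) <= eps / 8 /\ norm2 (v - xy.2) <= eps / 8.

Definition kappa_ok (kappa : R) : Prop :=
  forall (m n : nat) (x : 'cV[R]_m) (A : 'M[R]_(m, n)) (y : 'cV[R]_n),
    `|bilin x A y| <= kappa * norm1 x * norm1 y * frob A.

(* d i s  : number of requests for file i in slot s  (s = 0..t-1)
   rec j s : indicator v_j^{s-1} (file j recommended in the slot preceding s) *)
Definition Phat (F t N : nat) (d : 'I_F -> 'I_t -> nat) (rec : 'I_F -> 'I_t -> bool)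
  : 'M[R]_F :=
  \matrix_(i, j) ((\sum_(s < t) ((d i s)%:R * (rec j s)%:R))
                  / (N%:R * \sum_(s < t) (rec j s)%:R)).

End Defs.

(* Main.v *)
Require Import Defs.
From mathcomp Require Import all_boot all_order all_algebra.
From mathcomp Require Import boolp classical_sets reals sequences exp.
From mathcomp Require Import ring lra.
Import Order.TTheory GRing.Theory Num.Theory.
Local Open Scope ring_scope.

Section Aux.
Variable R : realType.

Lemma exp_up (y : R) : -1 <= y <= 1 -> expR y <= 1 + y + 2 * y ^+ 2.
Proof.
move=> /andP[y1 y2].
set z := y / 2.
have hz : y = z + z by rewrite /z; field.
have h1 := expR_ge1Dx (- z).
have e0 : 0 < expR z := expR_gt0 z.
have ee : expR z * expR (- z) = 1 by rewrite -expRD subrr expR0.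
have h2 : expR z * (1 - z) <= 1.
  rewrite -[X in _ <= X]ee; apply: ler_wpM2l; first exact: ltW.
  exact: h1.
have h3 : expR z <= 1 + z + 2 * z ^+ 2.
  have zl : z <= 1/2 by rewrite /z; lra.
  have zg : -1/2 <= z by rewrite /z; lra.
  nra.
rewrite hz expRD.
have zl : z <= 1/2 by rewrite /z; lra.
have zg : -1/2 <= z by rewrite /z; lra.
have h4 : expR z * expR z <= (1 + z + 2 * z ^+ 2) * (1 + z + 2 * z ^+ 2).
  apply: ler_pM; [exact: ltW|exact: ltW|exact: h3|exact: h3].
apply: (le_trans h4).
have hh : 0 <= z ^+ 2 * ((1 - 2 * z) * (3 + 2 * z)).
  apply: mulr_ge0; first exact: sqr_ge0.
  apply: mulr_ge0; lra.
have -> : 1 + (z + z) + 2 * (z + z) ^+ 2 = (1 + z + 2 * z ^+ 2) * (1 + z + 2 * z ^+ 2) + z ^+ 2 * ((1 - 2 * z) * (3 + 2 * z)) by ring.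
lra.
Qed.


Lemma mgf_base (p l : R) : 0 <= p <= 1 -> -1 <= l <= 1 ->
  (1 - p) * expR (- (l * p)) + p * expR (l * (1 - p)) <= expR (l ^+ 2 / 2).
Proof.
move=> /andP[p0 p1] /andP[l0 l1].
have a1 := exp_up (- (l * p)).
have a2 := exp_up (l * (1 - p)).
have b1 : -1 <= - (l * p) <= 1 by apply/andP; split; nra.
have b2 : -1 <= l * (1 - p) <= 1 by apply/andP; split; nra.
have c1 := a1 b1. have c2 := a2 b2.
apply: (@le_trans _ _ (1 + l ^+ 2 / 2)); last by have := expR_ge1Dx (l ^+ 2 / 2).
have d1 : (1 - p) * expR (- (l * p)) <= (1 - p) * (1 + - (l * p) + 2 * (- (l * p)) ^+ 2).
  by apply: ler_wpM2l; lra.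
have d2 : p * expR (l * (1 - p)) <= p * (1 + l * (1 - p) + 2 * (l * (1 - p)) ^+ 2).
  by apply: ler_wpM2l; lra.
have e : (1 - p) * (1 + - (l * p) + 2 * (- (l * p)) ^+ 2) +
    p * (1 + l * (1 - p) + 2 * (l * (1 - p)) ^+ 2) = 1 + 2 * l ^+ 2 * (p * (1 - p)) by ring.
have f : 2 * l ^+ 2 * (p * (1 - p)) <= l ^+ 2 / 2.
  have hl : 0 <= l ^+ 2 := sqr_ge0 l.
  have hp : p * (1 - p) <= 1/4.
    have := sqr_ge0 (p - 1/2); have -> : (p - 1/2) ^+ 2 = 1/4 - p * (1 - p) by field.
    lra.
  nra.
lra.
Qed.

Lemma mgf (N : nat) (p l : R) : 0 <= p <= 1 -> -1 <= l <= 1 ->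
  \sum_(x < N.+1) binom_pmf N p x * expR (l * (x%:R - N%:R * p))
  <= expR (N%:R * (l ^+ 2 / 2)).
Proof.
move=> hp hl.
have -> : \sum_(x < N.+1) binom_pmf N p x * expR (l * (x%:R - N%:R * p))
   = ((1 - p) + p * expR l) ^+ N * expR (- (l * p)) ^+ N.
  rewrite exprDn mulr_suml; apply: eq_bigr => x _.
  rewrite /binom_pmf.
  have -> : l * (x%:R - N%:R * p) = x%:R * l + N%:R * (- (l * p)) by ring.
  rewrite expRD !expRM_natl exprMn -mulr_natr; ring.
rewrite -exprMn expRM_natl; apply: lerXn2r.
- rewrite nnegrE; case/andP: hp => ? ?; apply: mulr_ge0; last exact: ltW (expR_gt0 _).
  apply: addr_ge0; first lra. by apply: mulr_ge0 => //; exact: ltW (expR_gt0 _).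
- by rewrite nnegrE; exact: ltW (expR_gt0 _).
have hb := mgf_base p l hp hl.
have -> : (1 - p + p * expR l) * expR (- (l * p)) = (1 - p) * expR (- (l * p)) + p * expR (l * (1 - p)).
  rewrite mulrDl -mulrA -expRD.
  by have -> : l + - (l * p) = l * (1 - p) by ring.
exact: hb.
Qed.


End Aux.
Set Implicit Arguments.
Unset Strict Implicit.

Section Prob.
Variables (R : realType) (Omega : finType) (mu : Omega -> R).
Hypothesis Hmu : is_pmf mu.

Lemma mu_ge0 w : 0 <= mu w. Proof. by case: Hmu. Qed.

Lemma Pr_ext (A B : Omega -> Prop) : (forall w, A w <-> B w) -> Pr mu A = Pr mu B.
Proof. by move=> h; apply: eq_bigr => w _; rewrite (propext (h w)). Qed.

Lemma PrE (b : pred Omega) : Pr mu (fun w => b w) = \sum_w mu w * (b w)%:R.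
Proof. by apply: eq_bigr => w _; rewrite asboolb; case: (b w); rewrite ?mulr1 ?mulr0. Qed.

Lemma Pr_sub (b : pred Omega) : Pr mu (fun w => b w) = \sum_(w | b w) mu w.
Proof. by rewrite big_mkcond; apply: eq_bigr => w _; rewrite asboolb. Qed.

Lemma Pr_ge0 A : 0 <= Pr mu A.
Proof. by apply: sumr_ge0 => w _; case: ifP => // _; exact: mu_ge0. Qed.

Lemma Pr_ge_mu (A : Omega -> Prop) w : A w -> mu w <= Pr mu A.
Proof.
move=> h; rewrite /Pr (bigD1 w) //= asboolT // lerDl.
by apply: sumr_ge0 => w' _; case: ifP => // _; exact: mu_ge0.
Qed.

Lemma Pr_compl A : Pr mu A + Pr mu (fun w => ~ A w) = 1.
Proof.
case: Hmu => _ <-; rewrite /Pr -big_split; apply: eq_bigr => w _ /=.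
by case: (asboolP (A w)) => h; [rewrite asboolF ?addr0 | rewrite asboolT ?add0r].
Qed.

Lemma Pr_le1 A : Pr mu A <= 1.
Proof. by rewrite -(Pr_compl A) lerDl Pr_ge0. Qed.

End Prob.
Section Model.
Variables (R : realType) (Omega : finType) (mu : Omega -> R).
Hypothesis Hmu : is_pmf mu.
Variables (F t N : nat) (P : 'M[R]_F) (rec : 'I_F -> 'I_t -> Omega -> bool)
  (d : 'I_F -> 'I_t -> Omega -> nat).
Hypothesis Hd : forall (i j : 'I_F) (a : 'I_t -> bool) (k : 'I_t -> nat),
     Pr mu (fun w => (forall s, rec j s w = a s) /\
                     (forall s, a s -> d i s w = k s))
     = Pr mu (fun w => forall s, rec j s w = a s)
       * \prod_(s | a s) binom_pmf N (P i j) (k s).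

Definition keyr j w : {ffun 'I_t -> bool} := [ffun s => rec j s w].
Definition okb w := [forall i, [forall j, [forall s, rec j s w ==> (d i s w <= N)%N]]].

Lemma mu0 i j s w : rec j s w -> (N < d i s w)%N -> mu w = 0.
Proof.
move=> hr hd.
have h := Hd i j (fun s => rec j s w) (fun s => d i s w).
have hz : \prod_(s0 | rec j s0 w) binom_pmf N (P i j) (d i s0 w) = 0.
  by rewrite (bigD1 s) //= /binom_pmf bin_small // !mul0r.
rewrite hz mulr0 in h.
apply/eqP; rewrite eq_le mu_ge0 // andbT -h.
by apply: Pr_ge_mu => //; split.
Qed.

Lemma mu_okb w : ~~ okb w -> mu w = 0.
Proof.
case/forallPn => i /forallPn [j] /forallPn [s].
rewrite negb_imply -ltnNge => /andP[hr hd].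
exact: mu0 hr hd.
Qed.

Lemma keyrP j w (a : {ffun 'I_t -> bool}) : (keyr j w == a) = `[< forall s, rec j s w = a s >].
Proof.
apply/eqP/asboolP => [<- s|h]; first by rewrite ffunE.
by apply/ffunP => s; rewrite ffunE.
Qed.


Lemma core i j (a : {ffun 'I_t -> bool}) (G : 'I_t -> nat -> R) :
  \sum_(w | keyr j w == a) mu w * \prod_(s | a s) G s (d i s w)
  = (\sum_(w | keyr j w == a) mu w) *
    \prod_(s | a s) \sum_(x < N.+1) binom_pmf N (P i j) x * G s x.
Proof.
pose kw w : {ffun 'I_t -> 'I_N.+1} := [ffun s => inord (if a s then d i s w else 0%N)].
pose H (k : {ffun 'I_t -> 'I_N.+1}) := \prod_(s | a s) G s (k s).
pose W (k : {ffun 'I_t -> 'I_N.+1}) := \prod_s (if a s then binom_pmf N (P i j) (k s)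
                                               else ((k s : nat) == 0%N)%:R).
pose Pa := \sum_(w | keyr j w == a) mu w.
have okd : forall w s, okb w -> keyr j w == a -> a s -> (d i s w < N.+1)%N.
  move=> w s ok hw hs.
  move/forallP: ok => /(_ i) /forallP /(_ j) /forallP /(_ s).
  by move: hw; rewrite keyrP => /asboolP ->; rewrite hs.
have step1 : \sum_(w | keyr j w == a) mu w * \prod_(s | a s) G s (d i s w)
     = \sum_(w | keyr j w == a) mu w * H (kw w).
  apply: eq_bigr => w hw.
  case: (boolP (okb w)) => ok; last by rewrite (mu_okb ok) !mul0r.
  congr (_ * _); apply: eq_bigr => s hs; rewrite ffunE hs inordK //.
  exact: okd.
have step3 : forall k, \sum_(w | (keyr j w == a) && (kw w == k)) mu w = Pa * W k.
  move=> k.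
  case: (boolP [forall s, ~~ a s ==> ((k s : nat) == 0%N)]) => hk.
  - have e1 : Pr mu (fun w => (forall s, rec j s w = a s) /\ (forall s, a s -> d i s w = k s))
        = \sum_(w | (keyr j w == a) && (kw w == k)) mu w.
      rewrite /Pr [RHS]big_mkcond; apply: eq_bigr => w _.
      case: (boolP (okb w)) => ok; last by rewrite (mu_okb ok); case: ifP; case: ifP.
      congr (if _ then _ else _).
      apply/asboolP/andP => [[hr hd]|[hr /eqP hkw]].
        have hw : keyr j w == a by rewrite keyrP; apply/asboolP.
        split => //; apply/eqP/ffunP => s; rewrite ffunE.
        case: (boolP (a s)) => hs; apply: val_inj; rewrite /=.
          by rewrite inordK; [exact: hd | exact: okd].
        rewrite inordK //.
        by move/forallP: hk => /(_ s); rewrite hs /= => /eqP ->.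
      move: (hr); rewrite keyrP => /asboolP hr'.
      split => // s hs.
      have := congr1 (fun f : {ffun 'I_t -> 'I_N.+1} => (f s : nat)) hkw; rewrite /= ffunE hs inordK //.
      exact: okd.
    have e2 : Pr mu (fun w => forall s, rec j s w = a s) = Pa.
      rewrite /Pa -Pr_sub; apply: Pr_ext => w; rewrite keyrP.
      by split => [h|/asboolP //]; apply/asboolP.
    have e3 : \prod_(s | a s) binom_pmf N (P i j) (k s) = W k.
      rewrite /W big_mkcond; apply: eq_bigr => s _.
      case: (boolP (a s)) => hs //.
      by move/forallP: hk => /(_ s); rewrite hs /= => /eqP ->.
    by rewrite -e1 (Hd i j a (fun s => k s)) e2 e3.
  - move/forallPn: hk => [s]; rewrite negb_imply => /andP[hs hks].
    have -> : W k = 0.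
      rewrite /W (bigD1 s) //= (negbTE hs) (negbTE hks) mul0r //.
    rewrite mulr0; apply: big1 => w /andP[_ /eqP hkw].
    have := congr1 (fun f : {ffun 'I_t -> 'I_N.+1} => (f s : nat)) hkw; rewrite /= ffunE (negbTE hs) inordK //.
    by move=> h; rewrite -h in hks.
rewrite step1 (partition_big kw predT) //=.
have e4 : forall k, \sum_(w | (keyr j w == a) && (kw w == k)) mu w * H (kw w)
          = Pa * (W k * H k).
  move=> k; rewrite mulrA -step3 mulr_suml; apply: eq_bigr => w /andP[_ /eqP ->] //.
rewrite (eq_bigr _ (fun k _ => e4 k)) -mulr_sumr; congr (_ * _).
have e5 : forall k : {ffun 'I_t -> 'I_N.+1}, W k * H k =
   \prod_s (if a s then binom_pmf N (P i j) (k s) * G s (k s) else ((k s : nat) == 0%N)%:R).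
  move=> k; rewrite /H /W [X in _ * X]big_mkcond -big_split; apply: eq_bigr => s _.
  by case: (a s) => //=; rewrite mulr1.
rewrite (eq_bigr _ (fun k _ => e5 k)).
rewrite -(bigA_distr_bigA (fun s (x : 'I_N.+1) =>
   if a s then binom_pmf N (P i j) x * G s x else ((x : nat) == 0%N)%:R)) /=.
rewrite [RHS]big_mkcond; apply: eq_bigr => s _.
case: (a s) => //.
rewrite (bigD1 ord0) //= big1 ?addr0 // => x hx.
by rewrite -(inj_eq val_inj) /= in hx; rewrite (negbTE hx).
Qed.

End Model.

Section Indep.
Variables (R : realType) (Omega : finType) (mu : Omega -> R).
Hypothesis Hmu : is_pmf mu.
Variables (F t : nat) (rec cache : 'I_F -> 'I_t -> Omega -> bool) (q : R).
Hypothesis Hind : mutually_independent mu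
    (fun x : ('I_F * 'I_t) + ('I_F * 'I_t) =>
       match x with inl js => rec js.1 js.2 | inr js => cache js.1 js.2 end).
Hypothesis Hq : forall j s, Pr mu (fun w => rec j s w = true) = q.

Lemma Pr_rec_a j (a : {ffun 'I_t -> bool}) :
  \sum_(w | keyr rec j w == a) mu w = \prod_s (if a s then q else 1 - q).
Proof.
pose h := fun s : 'I_t => (inl (j, s) : ('I_F * 'I_t) + ('I_F * 'I_t)).
pose b := fun x : ('I_F * 'I_t) + ('I_F * 'I_t) =>
   match x with inl js => a js.2 | inr _ => false end.
have := Hind (h @: [set: 'I_t]) b.
rewrite big_imset /=; last by move=> x y _ _ [].
move=> E.
rewrite -Pr_sub.
have -> : Pr mu (fun w => keyr rec j w == a) =
  Pr mu (fun w => forall i, i \in h @: [set: 'I_t] ->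
     (match i with inl js => rec js.1 js.2 | inr js => cache js.1 js.2 end) w = b i).
  apply: Pr_ext => w; rewrite keyrP; split.
    move=> /asboolP hr x /imsetP [s _ ->] /=; exact: hr.
  move=> hx; apply/asboolP => s.
  have hs : h s \in h @: [set: 'I_t] by apply/imsetP; exists s; rewrite ?in_setT.
  by have := hx (h s) hs.
rewrite E; apply: eq_big => [s|s _]; first by rewrite inE.
rewrite /= /b /=.
case: (a s); first exact: Hq.
have := Pr_compl Hmu (fun w => rec j s w = true).
rewrite Hq => e.
have -> : Pr mu (fun w => rec j s w = false) = Pr mu (fun w => ~ rec j s w = true).
  by apply: Pr_ext => w; case: (rec j s w).
by rewrite -e addrC addKr.
Qed.

Lemma q01 (j : 'I_F) (s : 'I_t) : 0 <= q <= 1.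
Proof. by rewrite -(Hq j s) Pr_ge0 ?Pr_le1. Qed.

End Indep.

Section Point.
Variable R : realType.

Lemma sum_const_filt (I : finType) (a : pred I) (c : R) :
  \sum_(s | a s) c = c * \sum_(s | a s) 1.
Proof. by rewrite mulr_sumr; apply: eq_bigr => s _; rewrite mulr1. Qed.

Lemma sum_ind (I : finType) (a : pred I) (f : I -> R) :
  \sum_s f s * (a s)%:R = \sum_(s | a s) f s.
Proof. by rewrite [RHS]big_mkcond; apply: eq_bigr => s _; case: (a s); rewrite ?mulr1 ?mulr0. Qed.

Lemma exp1 (x : R) : 0 <= x -> 1 <= expR x.
Proof. by move=> h; apply: le_trans (expR_ge1Dx x); rewrite lerDl. Qed.

Lemma one_leDl (A B : R) : 1 <= A -> 0 <= B -> 1 <= A + B.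
Proof. by move=> h1 h2; lra. Qed.
Lemma one_leDr (A B : R) : 1 <= B -> 0 <= A -> 1 <= A + B.
Proof. by move=> h1 h2; lra. Qed.

Lemma pointwise (t N : nat) (a : 'I_t -> bool) (x : 'I_t -> nat) (p eta l : R) :
  (0 < N)%N -> 0 <= l ->
  eta < `| (\sum_s (x s)%:R * (a s)%:R) / (N%:R * \sum_s (a s)%:R) - p | ->
  1 <= \prod_(s | a s) expR (l * ((x s)%:R - N%:R * p) - l * N%:R * eta)
     + \prod_(s | a s) expR (- l * ((x s)%:R - N%:R * p) - l * N%:R * eta).
Proof.
move=> N0 l0.
have eS := sum_ind a (fun s => (x s)%:R).
have em : \sum_s ((a s)%:R : R) = \sum_(s | a s) 1.
  by rewrite -(sum_ind a (fun _ => 1)); apply: eq_bigr => s _; rewrite mul1r.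
rewrite eS em.
set S := \sum_(s | a s) (x s)%:R.
set m := \sum_(s | a s) (1 : R).
move=> hb.
rewrite -!expR_sum.
have e1 : forall c : R, \sum_(s | a s) (c * ((x s)%:R - N%:R * p) - l * N%:R * eta)
    = c * (S - N%:R * p * m) - l * N%:R * eta * m.
  move=> c; rewrite sumrB -mulr_sumr sumrB -!sum_const_filt //.
have m0 : 0 <= m by apply: sumr_ge0 => s _; exact: ler01.
have S0 : 0 <= S by apply: sumr_ge0 => s _; exact: ler0n.
have N0' : 0 < (N%:R : R) by rewrite ltr0n.
rewrite !e1.
case: (ler0P m) => hm.
  have hm0 : m = 0 by apply/eqP; rewrite eq_le hm m0.
  rewrite hm0 !mulr0 !subr0.
  apply: one_leDl; last exact: expR_ge0.
  by apply: exp1; rewrite mulr_ge0.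
have Nm : 0 < N%:R * m by rewrite mulr_gt0.
have hb' : N%:R * m * eta < `|S - N%:R * p * m|.
  have -> : S - N%:R * p * m = (N%:R * m) * (S / (N%:R * m) - p).
    have Nm0 : N%:R * m != 0 by rewrite gt_eqF.
    rewrite mulrBr [_ * (S / _)]mulrC divfK //; ring.
  by rewrite normrM (gtr0_norm Nm) ltr_pM2l.
case: (lerP 0 (S - N%:R * p * m)) => hs.
  rewrite ger0_norm // in hb'.
  apply: one_leDl; last exact: expR_ge0.
  apply: exp1.
  have -> : l * (S - N%:R * p * m) - l * N%:R * eta * m = l * ((S - N%:R * p * m) - N%:R * m * eta) by ring.
  by apply: mulr_ge0 => //; rewrite subr_ge0 ltW.
rewrite ltr0_norm // in hb'.
apply: one_leDr; last exact: expR_ge0.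
apply: exp1.
have -> : - l * (S - N%:R * p * m) - l * N%:R * eta * m = l * (- (S - N%:R * p * m) - N%:R * m * eta) by ring.
by apply: mulr_ge0 => //; rewrite subr_ge0 ltW.
Qed.

End Point.

Lemma phat_le1 (R : realType) (t N : nat) (a : 'I_t -> bool) (x : 'I_t -> nat) (p : R) :
  (0 < N)%N -> 0 <= p <= 1 -> (forall s, a s -> (x s <= N)%N) ->
  `| (\sum_s (x s)%:R * (a s)%:R) / (N%:R * \sum_s (a s)%:R) - p | <= 1.
Proof.
move=> N0 /andP[p0 p1] hx.
rewrite sum_ind.
have em : \sum_s ((a s)%:R : R) = \sum_(s | a s) 1.
  by rewrite -(sum_ind a (fun _ => 1)); apply: eq_bigr => s _; rewrite mul1r.
rewrite em.
set S := \sum_(s | a s) (x s)%:R.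
set m := \sum_(s | a s) (1 : R).
have m0 : 0 <= m by apply: sumr_ge0 => s _; exact: ler01.
have S0 : 0 <= S by apply: sumr_ge0 => s _; exact: ler0n.
have SN : S <= N%:R * m.
  rewrite /S /m mulr_sumr; apply: ler_sum => s hs; rewrite mulr1 ler_nat; exact: hx.
have hy : 0 <= S / (N%:R * m) <= 1.
  apply/andP; split; first by apply: divr_ge0 => //; apply: mulr_ge0.
  case: (ler0P m) => hm.
    have hm0 : m = 0 by apply/eqP; rewrite eq_le hm m0.
    by rewrite hm0 mulr0 invr0 mulr0.
  have Nm : 0 < N%:R * m by rewrite mulr_gt0 // ltr0n.
  by rewrite ler_pdivrMr // mul1r.
move: hy => /andP[y0 y1].
rewrite ler_norml; apply/andP; split; lra.
Qed.

Section Bound.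
Variables (R : realType) (Omega : finType) (mu : Omega -> R).
Hypothesis Hmu : is_pmf mu.
Variables (F t N : nat) (P : 'M[R]_F) (rec cache : 'I_F -> 'I_t -> Omega -> bool)
  (d : 'I_F -> 'I_t -> Omega -> nat) (q : R).
Hypothesis Hd : forall (i j : 'I_F) (a : 'I_t -> bool) (k : 'I_t -> nat),
     Pr mu (fun w => (forall s, rec j s w = a s) /\
                     (forall s, a s -> d i s w = k s))
     = Pr mu (fun w => forall s, rec j s w = a s)
       * \prod_(s | a s) binom_pmf N (P i j) (k s).
Hypothesis Hind : mutually_independent mu
    (fun x : ('I_F * 'I_t) + ('I_F * 'I_t) =>
       match x with inl js => rec js.1 js.2 | inr js => cache js.1 js.2 end).
Hypothesis Hq : forall j s, Pr mu (fun w => rec j s w = true) = q.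

Lemma Mbound (p l eta : R) : 0 <= p <= 1 -> -1 <= l <= 1 -> l ^+ 2 = eta ^+ 2 -> 0 <= eta ->
  \sum_(x < N.+1) binom_pmf N p x * expR (l * (x%:R - N%:R * p) - eta * N%:R * eta)
  <= expR (- (N%:R * (eta ^+ 2 / 2))).
Proof.
move=> hp hl hle he.
have -> : \sum_(x < N.+1) binom_pmf N p x * expR (l * (x%:R - N%:R * p) - eta * N%:R * eta)
  = (\sum_(x < N.+1) binom_pmf N p x * expR (l * (x%:R - N%:R * p))) * expR (- (eta * N%:R * eta)).
  rewrite mulr_suml; apply: eq_bigr => x _; rewrite expRD; ring.
have hm := ler_wpM2r (expR_ge0 (- (eta * N%:R * eta))) (@mgf R N p l hp hl).
apply: le_trans hm _.
rewrite -expRD hle.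
have -> : N%:R * (eta ^+ 2 / 2) + - (eta * N%:R * eta) = - (N%:R * (eta ^+ 2 / 2)) by field.
by [].
Qed.


Lemma PrB_bound (i j : 'I_F) (eta : R) : (0 < N)%N -> 0 < eta -> 0 <= P i j <= 1 ->
  Pr mu (fun w => eta < `|Phat R N (fun i s => d i s w) (fun j s => rec j s w) i j - P i j|)
  <= 2 * (q * expR (- (N%:R * (eta ^+ 2 / 2))) + (1 - q)) ^+ t.
Proof.
move=> N0 e0 hp.
set rho := expR (- (N%:R * (eta ^+ 2 / 2))).
have rho0 : 0 <= rho := expR_ge0 _.
rewrite /Pr (partition_big (keyr rec j) predT) //=.
have hper : forall a : {ffun 'I_t -> bool},
  \sum_(w | keyr rec j w == a) (if `[< eta < `|Phat R N (fun i s => d i s w) (fun j s => rec j s w) i j - P i j| >] then mu w else 0)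
  <= 2 * ((\sum_(w | keyr rec j w == a) mu w) * \prod_(s | a s) rho).
  move=> a.
  have Pa0 : 0 <= \sum_(w | keyr rec j w == a) mu w by apply: sumr_ge0 => w _; exact: mu_ge0.
  have pr0 : 0 <= \prod_(s | a s) rho by apply: prodr_ge0.
  case: (lerP eta 1) => he1.
  - pose Gp := fun (s : 'I_t) (x : nat) => expR (eta * (x%:R - N%:R * P i j) - eta * N%:R * eta).
    pose Gm := fun (s : 'I_t) (x : nat) => expR (- eta * (x%:R - N%:R * P i j) - eta * N%:R * eta).
    apply: (@le_trans _ _ (\sum_(w | keyr rec j w == a) (mu w * \prod_(s | a s) Gp s (d i s w) + mu w * \prod_(s | a s) Gm s (d i s w)))).
      apply: ler_sum => w hw.
      case: (boolP (okb N rec d w)) => ok; last first.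
        by rewrite (mu_okb Hmu Hd ok) !mul0r addr0; case: ifP.
      have hr : forall s, rec j s w = a s by move: hw; rewrite keyrP => /asboolP.
      case: (asboolP _) => hB; last first.
        by apply: addr_ge0; apply: mulr_ge0; rewrite ?(mu_ge0 Hmu w) //; apply: prodr_ge0 => *; exact: expR_ge0.
      rewrite -mulrDr -[X in X <= _]mulr1; apply: ler_wpM2l; first exact: mu_ge0.
      rewrite /Phat mxE in hB.
      have hp1 := pointwise N0 (ltW e0) hB.
      have el : forall f : 'I_t -> R, \prod_(s | rec j s w) f s = \prod_(s | a s) f s.
        by move=> f; apply: eq_bigl => s; rewrite hr.
      rewrite !el in hp1.
      exact: hp1.
    rewrite big_split /= (core Hmu Hd i j a Gp) (core Hmu Hd i j a Gm).
    have b1 : \prod_(s | a s) \sum_(x < N.+1) binom_pmf N (P i j) x * Gp s x <= \prod_(s | a s) rho.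
      apply: ler_prod => s _; apply/andP; split.
        apply: sumr_ge0 => x _; apply: mulr_ge0; last exact: expR_ge0.
        case/andP: hp => p0 p1; rewrite /binom_pmf; apply: mulr_ge0; [apply: mulr_ge0 => // | ].
          exact: exprn_ge0.
        by apply: exprn_ge0; lra.
      apply: Mbound => //; last exact: ltW.
      by apply/andP; split; lra.
    have b2 : \prod_(s | a s) \sum_(x < N.+1) binom_pmf N (P i j) x * Gm s x <= \prod_(s | a s) rho.
      apply: ler_prod => s _; apply/andP; split.
        apply: sumr_ge0 => x _; apply: mulr_ge0; last exact: expR_ge0.
        case/andP: hp => p0 p1; rewrite /binom_pmf; apply: mulr_ge0; [apply: mulr_ge0 => // | ].
          exact: exprn_ge0.
        by apply: exprn_ge0; lra.
      apply: Mbound => //; last exact: ltW.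
        by apply/andP; split; lra.
      by rewrite sqrrN.
    have c1 := ler_wpM2l Pa0 b1.
    have c2 := ler_wpM2l Pa0 b2.
    lra.
  - apply: (@le_trans _ _ 0); last by apply: mulr_ge0 => //; apply: mulr_ge0.
    apply: (@le_trans _ _ (\sum_(w | keyr rec j w == a) (0:R))); last by rewrite big1.
    apply: ler_sum => w hw.
    case: (boolP (okb N rec d w)) => ok; last first.
      by rewrite (mu_okb Hmu Hd ok); case: ifP.
    case: (asboolP _) => hB //.
    exfalso; rewrite /Phat mxE in hB.
    have : `| (\sum_s (d i s w)%:R * (rec j s w)%:R) / (N%:R * \sum_s (rec j s w)%:R) - P i j | <= 1.
      apply: phat_le1 => // s hs.
      by move/forallP: ok => /(_ i) /forallP /(_ j) /forallP /(_ s); rewrite hs.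
    lra.
apply: le_trans (ler_sum _ (fun a _ => hper a)) _.
rewrite -mulr_sumr ler_pM2l ?ltr0n //.
under eq_bigr do rewrite (Pr_rec_a Hmu Hind Hq).
have e : forall a : {ffun 'I_t -> bool},
  (\prod_s (if a s then q else 1 - q)) * \prod_(s | a s) rho
  = \prod_s ((fun s (b : bool) => (if b then q else 1 - q) * (if b then rho else 1)) s (a s)).
  by move=> a; rewrite [X in _ * X]big_mkcond -big_split.
rewrite (eq_bigr _ (fun a _ => e a)) -(bigA_distr_bigA (fun s (b : bool) => (if b then q else 1 - q) * (if b then rho else 1))) /=.
under eq_bigr do rewrite big_bool /= mulr1.
by rewrite prodr_const card_ord mulrC.
Qed.

End Bound.

Section Det.
Variable R : realType.

Lemma bilin_E (F : nat) (x : 'cV[R]_F) (A : 'M[R]_F) (y : 'cV[R]_F) :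
  bilin x A y = \sum_i \sum_j x i 0 * A i j * y j 0.
Proof.
rewrite /bilin mxE.
under eq_bigr => j _ do rewrite [(x^T *m A) 0 j]mxE mulr_suml.
rewrite exchange_big; apply: eq_bigr => i _; apply: eq_bigr => j _.
by rewrite mxE.
Qed.

Lemma bilin_diff (F : nat) (u v : 'cV[R]_F) (A B : 'M[R]_F) (eta c r : R) :
  inC c r u v -> (forall i j, `|A i j - B i j| <= eta) -> 0 <= eta ->
  `|bilin u A v - bilin u B v| <= eta * c * r.
Proof.
move=> [hu [hv [su sv]]] hAB e0.
rewrite !bilin_E -sumrB.
have -> : \sum_i (\sum_j u i 0 * A i j * v j 0 - \sum_j u i 0 * B i j * v j 0)
   = \sum_i \sum_j u i 0 * (A i j - B i j) * v j 0.
  apply: eq_bigr => i _; rewrite -sumrB; apply: eq_bigr => j _; ring.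
apply: le_trans (ler_norm_sum _ _ _) _.
apply: (@le_trans _ _ (\sum_i \sum_j u i 0 * eta * v j 0)).
  apply: ler_sum => i _; apply: le_trans (ler_norm_sum _ _ _) _.
  apply: ler_sum => j _.
  have /andP[u0 _] := hu i; have /andP[v0 _] := hv j.
  rewrite !normrM (ger0_norm u0) (ger0_norm v0).
  by apply: ler_wpM2r => //; apply: ler_wpM2l.
have e : eta * (\sum_i u i 0) * (\sum_j v j 0) = \sum_i \sum_j u i 0 * eta * v j 0.
  rewrite -mulrA mulr_suml mulr_sumr; apply: eq_bigr => i _.
  rewrite mulr_sumr mulr_sumr; apply: eq_bigr => j _; ring.
rewrite -e.
have s0 : 0 <= \sum_i u i 0 by apply: sumr_ge0 => i _; case/andP: (hu i).
have t0 : 0 <= \sum_j v j 0 by apply: sumr_ge0 => j _; case/andP: (hv j).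
apply: ler_pM => //; first exact: mulr_ge0.
exact: ler_wpM2l.
Qed.

Lemma inC0 (F : nat) (c r : R) : 0 < c -> 0 < r -> inC c r (0 : 'cV[R]_F) 0.
Proof.
move=> c0 r0; split; [|split; [|split]].
- by move=> i; rewrite mxE lexx ler01.
- by move=> i; rewrite mxE lexx ler01.
- by rewrite big1 ?ltW // => i _; rewrite mxE.
- by rewrite big1 ?ltW // => i _; rewrite mxE.
Qed.

Lemma det (F : nat) (c r eta : R) (P Ph : 'M[R]_F) (u' v' : 'cV[R]_F) :
  0 < c -> 0 < r -> 0 <= eta -> (forall i j, `|Ph i j - P i j| <= eta) ->
  is_argmaxC c r Ph u' v' -> supC c r P <= bilin u' P v' + 2 * eta * c * r.
Proof.
move=> c0 r0 e0 hd [hC hmax].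
apply: ge_sup.
  by exists (bilin 0 P 0); exists 0, 0; split => //; exact: inC0.
move=> x [u [v [huv ->]]].
have h1 := bilin_diff huv hd e0.
have h2 := bilin_diff hC hd e0.
have h3 := hmax u v huv.
move: h1 h2; rewrite !ler_norml => /andP[h1 h1'] /andP[h2 h2'].
lra.
Qed.

Lemma kappa_ge1 (kappa : R) : kappa_ok kappa -> 1 <= kappa.
Proof.
move=> hk.
have := hk 1%N 1%N (const_mx 1) (const_mx 1) (const_mx 1).
rewrite bilin_E /norm1 /frob !big_ord1 !mxE !mulr1 normr1 expr1n sqrtr1 !mulr1.
by [].
Qed.

Lemma sum_ge_term (I : finType) (f : I -> R) i : (forall j, 0 <= f j) -> f i <= \sum_j f j.
Proof.
move=> h; rewrite (bigD1 i) //= lerDl; apply: sumr_ge0 => j _; exact: h.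
Qed.

End Det.

Lemma arith (R : realType) (F N t : nat) (c r eps delta kappa q M : R) :
  (0 < F)%N -> (0 < N)%N -> 0 < c -> 0 < r -> 0 < eps -> 0 < delta -> 1 <= kappa -> 1 <= M ->
  q = r / F%:R -> ((0 < t)%N -> q <= 1) ->
  t%:R >= 1 / (q * (1 - expR (- (N%:R * eps ^+ 2)
                          / (8 * kappa ^+ 2 * F%:R ^+ 2 * c ^+ 2 * r ^+ 2))))
          * ln (2 * M * F%:R ^+ 2 / delta) ->
  2 * (q * expR (- (N%:R * ((eps / (2 * c * r)) ^+ 2 / 2))) + (1 - q)) ^+ t * F%:R * F%:R
  <= delta.
Proof.
move=> F0 N0 c0 r0 e0 d0 k1 M1 hq hq1 ht.
set rho := expR (- (N%:R * ((eps / (2 * c * r)) ^+ 2 / 2))).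
set rho0 := expR (- (N%:R * eps ^+ 2) / (8 * kappa ^+ 2 * F%:R ^+ 2 * c ^+ 2 * r ^+ 2)).
set X := 2 * M * F%:R ^+ 2 / delta.
set L := ln X.
move: ht; rewrite -/rho0 -/X -/L => ht.
have Fr : 1 <= (F%:R : R) by rewrite ler1n.
have Fp : 0 < (F%:R : R) by lra.
have Np : 0 < (N%:R : R) by rewrite ltr0n.
have q0 : 0 < q by rewrite hq divr_gt0.
have Dp : 0 < 8 * kappa ^+ 2 * F%:R ^+ 2 * c ^+ 2 * r ^+ 2.
  by rewrite !mulr_gt0 // ?exprn_gt0 //; lra.
have hrho : rho <= rho0.
  rewrite /rho /rho0 ler_expR.
  have e1 : N%:R * ((eps / (2 * c * r)) ^+ 2 / 2) = (N%:R * eps ^+ 2) / (8 * c ^+ 2 * r ^+ 2).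
    by field; apply/andP; split; rewrite gt_eqF.
  rewrite e1 mulNr lerN2.
  apply: ler_wpM2l; first by apply: mulr_ge0; [exact: ltW | exact: sqr_ge0].
  have Cp : 0 < 8 * c ^+ 2 * r ^+ 2 by rewrite !mulr_gt0 // ?exprn_gt0.
  rewrite lef_pV2 ?posrE //.
  have k2 : 1 <= kappa ^+ 2 by nra.
  have f2 : 1 <= F%:R ^+ 2 :> R by nra.
  have kf : 1 <= kappa ^+ 2 * F%:R ^+ 2 by nra.
  have -> : 8 * kappa ^+ 2 * F%:R ^+ 2 * c ^+ 2 * r ^+ 2 = (kappa ^+ 2 * F%:R ^+ 2) * (8 * c ^+ 2 * r ^+ 2) by ring.
  by rewrite ler_peMl // ltW.
have hrho0 : rho0 < 1.
  rewrite /rho0 expR_lt1 mulNr oppr_lt0 divr_gt0 // mulr_gt0 // exprn_gt0 //.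
have rho_ge0 : 0 <= rho := expR_ge0 _.
set D0 := q * (1 - rho0).
have D0p : 0 < D0 by rewrite /D0 mulr_gt0 // subr_gt0.
have hL : L <= t%:R * D0.
  have := ler_wpM2r (ltW D0p) ht.
  by rewrite (_ : 1 / D0 * L * D0 = L) //; field; rewrite gt_eqF.
have hbase : (q * rho + (1 - q)) ^+ t <= expR (- (t%:R * D0)).
  move: hq1 hL; clear ht; case: t => [|t'] hq1 hL.
    by rewrite expr0 mul0r oppr0 expR0.
  have q1 : q <= 1 by apply: hq1.
  have b0 : 0 <= q * rho + (1 - q) by apply: addr_ge0; [apply: mulr_ge0; lra | lra].
  have b1 : q * rho + (1 - q) <= expR (- D0).
    apply: le_trans (expR_ge1Dx _); rewrite /D0.
    have := ler_wpM2l (ltW q0) hrho; lra.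
  apply: le_trans (lerXn2r _ _ _ b1) _; rewrite ?nnegrE ?expR_ge0 //.
  by rewrite -expRM_natl mulrN.
have X0 : 0 < X by rewrite /X divr_gt0 // !mulr_gt0 // ?exprn_gt0 //; lra.
have hexp : expR (- (t%:R * D0)) <= X^-1.
  rewrite -(lnK (x:=X)) ?posrE // -expRN ler_expR lerN2 //.
apply: (@le_trans _ _ (2 * X^-1 * F%:R * F%:R)).
  apply: ler_wpM2r; first exact: ltW.
  apply: ler_wpM2r; first exact: ltW.
  by apply: ler_wpM2l => //; apply: le_trans hbase hexp.
have -> : 2 * X^-1 * F%:R * F%:R = delta / M.
  rewrite /X; field; rewrite !gt_eqF //; lra.
rewrite ler_pdivrMr; last lra.
have := ler_wpM2l (ltW d0) M1; lra.
Qed.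

Unset Implicit Arguments.
Set Strict Implicit.

Theorem theorem2 (R : realType) (F N t : nat) (c r eps delta kappa : R)
  (P : 'M[R]_F) (cov : seq ('cV[R]_F * 'cV[R]_F))
  (Omega : finType) (mu : Omega -> R)
  (rec : 'I_F -> 'I_t -> Omega -> bool)     (* v_j^{s-1}, s = 0..t-1 *)
  (cache : 'I_F -> 'I_t -> Omega -> bool)   (* caching indicators *)
  (d : 'I_F -> 'I_t -> Omega -> nat)        (* requests d_i^(s) *)
  (ustar vstar : Omega -> 'cV[R]_F) :
  (0 < N)%N -> 0 < c -> 0 < r -> 0 < eps -> 0 < delta -> 0 < kappa ->
  kappa_ok kappa ->
  (forall i j, 0 <= P i j <= 1) ->
  is_eps_cover c r eps cov ->
  is_pmf mu ->
  (* recommendation and caching indicators: mutually independent,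
     Bernoulli(q = r/F) and Bernoulli(p = c/F) respectively *)
  mutually_independent mu
    (fun x : ('I_F * 'I_t) + ('I_F * 'I_t) =>
       match x with inl js => rec js.1 js.2 | inr js => cache js.1 js.2 end) ->
  (forall j s, Pr mu (fun w => rec j s w = true) = r / F%:R) ->
  (forall j s, Pr mu (fun w => cache j s w = true) = c / F%:R) ->
  (* conditionally on the recommendation indicators of file j, the d_i^{(s)}
     over the slots s with v_j^{s-1} = 1 are independent Binomial(N, p_ij) *)
  (forall (i j : 'I_F) (a : 'I_t -> bool) (k : 'I_t -> nat),
     Pr mu (fun w => (forall s, rec j s w = a s) /\
                     (forall s, a s -> d i s w = k s))
     = Pr mu (fun w => forall s, rec j s w = a s)
       * \prod_(s | a s) binom_pmf N (P i j) (k s)) ->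
  (* the pair ustar, vstar is an argmax of u^T Phat v over C_{c,r} *)
  (forall w, is_argmaxC c r (Phat R N (fun i s => d i s w) (fun j s => rec j s w))
                        (ustar w) (vstar w)) ->
  (* sample-size condition *)
  t%:R >= 1 / ((r / F%:R) *
               (1 - expR (- (N%:R * eps ^+ 2)
                          / (8 * kappa ^+ 2 * F%:R ^+ 2 * c ^+ 2 * r ^+ 2))))
          * ln (2 * (size cov)%:R * F%:R ^+ 2 / delta) ->
  Pr mu (fun w => bilin (ustar w) P (vstar w) >= supC c r P - eps) >= 1 - delta.
Proof.
move=> N0 c0 r0 e0 d0 k0 hk hP hcov hmu hind hrec hcache hd hmax ht.
set eta := eps / (2 * c * r).
have eta0 : 0 < eta by rewrite /eta divr_gt0 // !mulr_gt0.
have k1 := kappa_ge1 hk.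
set B := fun (i j : 'I_F) w =>
  eta < `|Phat R N (fun i s => d i s w) (fun j s => rec j s w) i j - P i j|.
have hsum : \sum_i \sum_j Pr mu (fun w => B i j w) <= delta.
  set K := 2 * ((r / F%:R) * expR (- (N%:R * (eta ^+ 2 / 2))) + (1 - r / F%:R)) ^+ t.
  apply: (@le_trans _ _ (\sum_(i < F) \sum_(j < F) K)).
    apply: ler_sum => i _; apply: ler_sum => j _.
    exact: (PrB_bound hmu hd hind hrec N0 eta0 (hP i j)).
  rewrite !sumr_const !card_ord -mulr_natr -(mulr_natr K).
  have [F0|Fp] := posnP F.
    by rewrite F0 !mulr0; exact: ltW.
  have hM : 1 <= (size cov)%:R :> R.
    case: hcov => _ /(_ 0 0 (inC0 F c0 r0)) [xy hxy _].
    by rewrite ler1n; case: (cov) hxy.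
  apply: (arith Fp N0 c0 r0 e0 d0 k1 hM (erefl _)) => //.
  move=> t0; by case/andP: (q01 hmu hrec (Ordinal Fp) (Ordinal t0)).
pose good w := [forall i, [forall j, ~~ B i j w]].
have h1 : \sum_w mu w * (good w)%:R <=
    Pr mu (fun w => bilin (ustar w) P (vstar w) >= supC c r P - eps).
  rewrite /Pr; apply: ler_sum => w _.
  case: (boolP (good w)) => g; last first.
    by rewrite mulr0; case: ifP => _ //; exact: (mu_ge0 hmu).
  rewrite mulr1 asboolT //.
  have hdd : forall i j, `|Phat R N (fun i s => d i s w) (fun j s => rec j s w) i j - P i j| <= eta.
    move=> i j; move/forallP: g => /(_ i) /forallP /(_ j).
    by rewrite /B -leNgt.
  have := det c0 r0 (ltW eta0) hdd (hmax w).
  have -> : 2 * eta * c * r = eps by rewrite /eta; field; apply/andP; split; rewrite gt_eqF.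
  move=> h; lra.
have h2 : \sum_w mu w = 1 by case: hmu.
have h3 : \sum_i \sum_j Pr mu (fun w => B i j w) = \sum_w mu w * \sum_i \sum_j (B i j w)%:R.
  symmetry.
  rewrite (eq_bigr (fun w => \sum_i \sum_j mu w * (B i j w)%:R)); last first.
    by move=> w _; rewrite mulr_sumr; apply: eq_bigr => i _; rewrite mulr_sumr.
  rewrite exchange_big; apply: eq_bigr => i _; rewrite exchange_big; apply: eq_bigr => j _.
  by rewrite PrE.
have h4 : \sum_w mu w <= \sum_w mu w * (good w)%:R + \sum_w mu w * \sum_i \sum_j (B i j w)%:R.
  rewrite -big_split; apply: ler_sum => w _ /=.
  rewrite -mulrDr -[X in X <= _]mulr1; apply: ler_wpM2l; first exact: (mu_ge0 hmu).
  have s0 : 0 <= \sum_i \sum_j ((B i j w)%:R : R).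
    by apply: sumr_ge0 => i _; apply: sumr_ge0 => j _; exact: ler0n.
  case: (boolP (good w)) => g.
    by rewrite /=; lra.
  move/forallPn: g => [i] /forallPn [j]; rewrite negbK => hB.
  have : 1 <= \sum_i \sum_j ((B i j w)%:R : R).
    apply: (@le_trans _ _ (\sum_j ((B i j w)%:R : R))).
      apply: (@le_trans _ _ ((B i j w)%:R)); first by rewrite hB.
      by apply: sum_ge_term => j'; exact: ler0n.
    by apply: sum_ge_term => i'; apply: sumr_ge0 => j' _; exact: ler0n.
  move=> h; rewrite /= in h *; lra.
lra.
Qed.
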